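(* Let $(\theta^-,\theta^+)$ be the maximal open interval containing $0$ on which the function $\gamma$ exists. Then $\tilde\theta(\theta)=\theta$ is the only continuously differentiable function $\tilde\theta:(\theta^-,\theta^+)\to(\theta^-,\theta^+)$ with $\tilde\theta(0)=0$ and $f_{\mathbf{u}_0}(\tilde\theta(\theta),\theta)=0$ for all $\theta\in(\theta^-,\theta^+)$, where $f_{\mathbf{u}_0}(\tilde\theta,\theta):=\mathbf{t}_2^d(\gamma(\tilde\theta))\cdot\mathbf{t}_4^r-\mathbf{t}_2^d(\gamma(\theta))\cdot\mathbf{t}_4^r$. The same holds with $f_{\mathbf{u}_0}$ replaced by $f_{\mathbf{v}_0}(\tilde\theta,\theta):=\mathbf{t}_3^d(\tilde\theta)\cdot\mathbf{t}_1^r-\mathbf{t}_3^d(\theta)\cdot\mathbf{t}_1^r$.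
   Context: Fix $\mathbf{t}_1^r,\dots,\mathbf{t}_4^r\in\mathbb{R}^3$ with $\mathbf{t}_i^r\cdot(\mathbf{t}_j^r\times\mathbf{t}_k^r)\neq0$ for $ijk\in\{123,234,341,412\}$. For nonzero $\mathbf{t}$ let $\mathbf{R}_{\mathbf{t}}(\varphi):=|\mathbf{t}|^{-2}\mathbf{t}\otimes\mathbf{t}+\cos\varphi(\mathbf{I}-|\mathbf{t}|^{-2}\mathbf{t}\otimes\mathbf{t})+|\mathbf{t}|^{-1}\sin\varphi(\mathbf{t}\times)$. Set $\mathbf{t}_2^d(\gamma):=\mathbf{R}_{\mathbf{t}_1^r}(\gamma)\mathbf{t}_2^r$, $\mathbf{t}_3^d(\theta):=\mathbf{R}_{\mathbf{t}_4^r}(\theta)\mathbf{t}_3^r$. The function $\gamma$ is the unique $C^1$ function with $\gamma(0)=0$, $\mathbf{t}_2^d(\gamma(\theta))\cdot\mathbf{t}_3^d(\theta)=\mathbf{t}_2^r\cdot\mathbf{t}_3^r$, and such that the four quantities $[\mathbf{t}_1^r\cdot(\mathbf{t}_2^d(\gamma(\theta))\times\mathbf{t}_3^d(\theta))][\mathbf{t}_1^r\cdot(\mathbf{t}_2^r\times\mathbf{t}_3^r)]$, $[\mathbf{t}_2^d(\gamma(\theta))\cdot(\mathbf{t}_3^d(\theta)\times\mathbf{t}_4^r)][\mathbf{t}_2^r\cdot(\mathbf{t}_3^r\times\mathbf{t}_4^r)]$, $[\mathbf{t}_3^d(\theta)\cdot(\mathbf{t}_4^r\times\mathbf{t}_1^r)][\mathbf{t}_3^r\cdot(\mathbf{t}_4^r\times\mathbf{t}_1^r)]$,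 $[\mathbf{t}_4^r\cdot(\mathbf{t}_1^r\times\mathbf{t}_2^d(\gamma(\theta)))][\mathbf{t}_4^r\cdot(\mathbf{t}_1^r\times\mathbf{t}_2^r)]$ are positive; it is analytic with $\gamma'(\theta)=\frac{|\mathbf{t}_1^r|}{|\mathbf{t}_4^r|}\frac{\mathbf{t}_2^d(\gamma(\theta))\cdot(\mathbf{t}_3^d(\theta)\times\mathbf{t}_4^r)}{\mathbf{t}_1^r\cdot(\mathbf{t}_2^d(\gamma(\theta))\times\mathbf{t}_3^d(\theta))}$. *)

(* Defs.v *)
From Stdlib Require Import Reals.
From Coquelicot Require Import Coquelicot.
Open Scope R_scope.

Definition vec3 : Type := (R * R * R)%type.

Definition vx (v : vec3) : R := fst (fst v).
Definition vy (v : vec3) : R := snd (fst v).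
Definition vz (v : vec3) : R := snd v.
Definition mkv (a b c : R) : vec3 := (a, b, c).

Definition dot (u v : vec3) : R := vx u * vx v + vy u * vy v + vz u * vz v.
Definition cross (u v : vec3) : vec3 :=
  mkv (vy u * vz v - vz u * vy v)
      (vz u * vx v - vx u * vz v)
      (vx u * vy v - vy u * vx v).
Definition vadd (u v : vec3) : vec3 := mkv (vx u + vx v) (vy u + vy v) (vz u + vz v).
Definition vsub (u v : vec3) : vec3 := mkv (vx u - vx v) (vy u - vy v) (vz u - vz v).
Definition vscal (a : R) (v : vec3) : vec3 := mkv (a * vx v) (a * vy v) (a * vz v).
Definition vnorm (v : vec3) : R := sqrt (dot v v).

Definition triple (a b c : vec3) : R := dot a (cross b c).

Definition rot (t : vec3) (phi : R) (v : vec3) : vec3 :=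
  let p := vscal (/ (vnorm t ^ 2) * dot t v) t in
  vadd (vadd p (vscal (cos phi) (vsub v p)))
       (vscal (/ vnorm t * sin phi) (cross t v)).

Definition t2d (t1 t2 : vec3) (g : R) : vec3 := rot t1 g t2.
Definition t3d (t4 t3 : vec3) (th : R) : vec3 := rot t4 th t3.

Definition nondeg (t1 t2 t3 t4 : vec3) : Prop :=
  triple t1 t2 t3 <> 0 /\ triple t2 t3 t4 <> 0 /\
  triple t3 t4 t1 <> 0 /\ triple t4 t1 t2 <> 0.

Definition in_int (a b : Rbar) (x : R) : Prop := Rbar_lt a x /\ Rbar_lt x b.

Definition C1_on (a b : Rbar) (f : R -> R) : Prop :=
  (forall x, in_int a b x -> ex_derive f x) /\
  (forall x, in_int a b x -> continuous (Derive f) x).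

(* g is "the function gamma" on the open interval (a,b) containing 0:
   C^1, g 0 = 0, the dot-product constraint, and the four sign conditions. *)
Definition gamma_sol (t1 t2 t3 t4 : vec3) (a b : Rbar) (g : R -> R) : Prop :=
  in_int a b 0 /\
  C1_on a b g /\
  g 0 = 0 /\
  forall th, in_int a b th ->
    dot (t2d t1 t2 (g th)) (t3d t4 t3 th) = dot t2 t3 /\
    triple t1 (t2d t1 t2 (g th)) (t3d t4 t3 th) * triple t1 t2 t3 > 0 /\
    triple (t2d t1 t2 (g th)) (t3d t4 t3 th) t4 * triple t2 t3 t4 > 0 /\
    triple (t3d t4 t3 th) t4 t1 * triple t3 t4 t1 > 0 /\
    triple t4 t1 (t2d t1 t2 (g th)) * triple t4 t1 t2 > 0.

Definition gamma_maximal (t1 t2 t3 t4 : vec3) (a b : Rbar) (g : R -> R) : Prop :=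
  gamma_sol t1 t2 t3 t4 a b g /\
  forall a' b' g', gamma_sol t1 t2 t3 t4 a' b' g' -> Rbar_le a a' /\ Rbar_le b' b.

Definition f_u0 (t1 t2 t4 : vec3) (g : R -> R) (tt th : R) : R :=
  dot (t2d t1 t2 (g tt)) t4 - dot (t2d t1 t2 (g th)) t4.
Definition f_v0 (t1 t3 t4 : vec3) (tt th : R) : R :=
  dot (t3d t4 t3 tt) t1 - dot (t3d t4 t3 th) t1.

Definition admissible (a b : Rbar) (F : R -> R -> R) (tt : R -> R) : Prop :=
  C1_on a b tt /\
  (forall th, in_int a b th -> in_int a b (tt th)) /\
  tt 0 = 0 /\
  (forall th, in_int a b th -> F (tt th) th = 0).

Definition unique_id_solution (a b : Rbar) (F : R -> R -> R) : Prop :=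
  admissible a b F (fun th => th) /\
  forall tt, admissible a b F tt -> forall th, in_int a b th -> tt th = th.

(* Main.v *)
Require Import Defs.
From Stdlib Require Import Reals Lra.
From Coquelicot Require Import Coquelicot.
Open Scope R_scope.

Definition vderive (a : R -> vec3) x (da : vec3) :=
  is_derive (fun y => vx (a y)) x (vx da) /\ is_derive (fun y => vy (a y)) x (vy da)
  /\ is_derive (fun y => vz (a y)) x (vz da).

Lemma rot_vderive t v p : vnorm t <> 0 ->
  vderive (fun p => rot t p v) p (vscal (/vnorm t) (cross t (rot t p v))).
Proof.
intros Hn.
assert (HN : vnorm t * vnorm t = dot t t).
{ unfold vnorm. apply sqrt_sqrt. destruct t as [[a b] c]; unfold dot, vx, vy, vz; simpl. nra. }
unfold vderive, rot. simpl pow. revert Hn HN. generalize (vnorm t). intros n Hn HN.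
destruct t as [[a b] c]; destruct v as [[d e] f].
unfold vderive, rot, vscal, vadd, vsub, cross, mkv, dot, vx, vy, vz in *; simpl in *.
split; [|split]; (auto_derive; [ tauto | field_simplify_eq; [ replace (n^3) with (n*(n*n)) by ring; rewrite HN; ring | auto ] ]).
Qed.

Lemma isd_eq (f : R -> R) x l l' : is_derive f x l -> l = l' -> is_derive f x l'.
Proof. intros H ->; exact H. Qed.

Lemma isd_mult (f g : R -> R) x df dg : is_derive f x df -> is_derive g x dg ->
  is_derive (fun y => f y * g y) x (df * g x + f x * dg).
Proof. intros. apply (is_derive_mult f g x df dg); auto. intros; apply Rmult_comm. Qed.

Lemma isd_plus (f g : R -> R) x df dg : is_derive f x df -> is_derive g x dg ->
  is_derive (fun y => f y + g y) x (df + dg).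
Proof. intros. apply (is_derive_plus f g x df dg); auto. Qed.

Lemma vderive_comp a g x da dg : vderive a (g x) da -> is_derive g x dg ->
  vderive (fun y => a (g y)) x (vscal dg da).
Proof.
intros [H1 [H2 H3]] Hg. destruct da as [[p q] r].
unfold vscal, mkv, vx, vy, vz in *; simpl in *.
split; [|split].
- apply (is_derive_comp (fun p => fst (fst (a p))) g x p dg H1 Hg).
- apply (is_derive_comp (fun p => snd (fst (a p))) g x q dg H2 Hg).
- apply (is_derive_comp (fun p => snd (a p)) g x r dg H3 Hg).
Qed.

Lemma vderive_const w x : vderive (fun _ => w) x (mkv 0 0 0).
Proof. split; [|split]; auto_derive; auto; unfold mkv, vx, vy, vz; simpl; ring. Qed.

Lemma dot_vderive a b x da db : vderive a x da -> vderive b x db ->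
  is_derive (fun y => dot (a y) (b y)) x (dot da (b x) + dot (a x) db).
Proof.
intros [A1 [A2 A3]] [B1 [B2 B3]]. unfold dot.
eapply isd_eq.
- apply isd_plus; [apply isd_plus|]; apply isd_mult; eauto.
- simpl. ring.
Qed.

Lemma L_a g k t r w : dot (vscal g (vscal k (cross t r))) w = g * k * triple w t r.
Proof. destruct t as [[? ?] ?], r as [[? ?] ?], w as [[? ?] ?].
unfold triple, dot, vscal, cross, mkv, vx, vy, vz; simpl; ring. Qed.
Lemma L_a1 k t r w : dot (vscal k (cross t r)) w = k * triple w t r.
Proof. destruct t as [[? ?] ?], r as [[? ?] ?], w as [[? ?] ?].
unfold triple, dot, vscal, cross, mkv, vx, vy, vz; simpl; ring. Qed.
Lemma L_b k r t s : dot r (vscal k (cross t s)) = - k * triple r s t.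
Proof. destruct t as [[? ?] ?], r as [[? ?] ?], s as [[? ?] ?].
unfold triple, dot, vscal, cross, mkv, vx, vy, vz; simpl; ring. Qed.
Lemma L_c r : dot r (mkv 0 0 0) = 0.
Proof. destruct r as [[? ?] ?]. unfold dot, mkv, vx, vy, vz; simpl; ring. Qed.
Lemma L_0 k r w : dot (vscal 0 (vscal k r)) w = 0.
Proof. destruct r as [[? ?] ?], w as [[? ?] ?].
unfold dot, vscal, mkv, vx, vy, vz; simpl; ring. Qed.
Lemma triple_cyc a b c : triple a b c = triple b c a.
Proof. destruct a as [[? ?] ?], b as [[? ?] ?], c as [[? ?] ?].
unfold triple, dot, cross, mkv, vx, vy, vz; simpl; ring. Qed.
Lemma triple_swap a b c : triple a b c = - triple c b a.
Proof. destruct a as [[? ?] ?], b as [[? ?] ?], c as [[? ?] ?].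
unfold triple, dot, cross, mkv, vx, vy, vz; simpl; ring. Qed.

Lemma norm_nz t u w : triple t u w <> 0 -> vnorm t <> 0.
Proof.
intros Ht H. apply Ht. destruct t as [[a b] c].
unfold vnorm, dot, vx, vy, vz in H; simpl in H.
apply sqrt_eq_0 in H; [|nra].
assert (a = 0) by nra. assert (b = 0) by nra. assert (c = 0) by nra. subst.
destruct u as [[? ?] ?], w as [[? ?] ?].
unfold triple, dot, cross, mkv, vx, vy, vz; simpl; ring.
Qed.

Lemma prod_pos_nz a b : a * b > 0 -> a <> 0.
Proof. intros H E; subst; lra. Qed.

Lemma in_int_between a b x y z : Defs.in_int a b x -> Defs.in_int a b y -> x <= z <= y -> Defs.in_int a b z.
Proof.
intros [H1 H2] [H3 H4] [H5 H6]. split.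
- apply (Rbar_lt_le_trans a (Finite x) (Finite z)); auto.
- apply (Rbar_le_lt_trans (Finite z) (Finite y) b); auto.
Qed.

Lemma locally_int a b x : Defs.in_int a b x -> locally x (Defs.in_int a b).
Proof.
intros H. apply (locally_open (Defs.in_int a b)); auto.
apply open_and; [apply open_Rbar_gt | apply open_Rbar_lt].
Qed.

Lemma inj_deriv a b (h : R -> R) : (forall x, Defs.in_int a b x -> exists l, is_derive h x l /\ l <> 0) ->
  forall x y, Defs.in_int a b x -> Defs.in_int a b y -> h x = h y -> x = y.
Proof.
intros Hd x y Hx Hy Hxy.
destruct (Req_dec x y) as [E|E]; auto. exfalso.
assert (Hm : Defs.in_int a b (Rmin x y)) by (unfold Rmin; destruct Rle_dec; auto).
assert (HM : Defs.in_int a b (Rmax x y)) by (unfold Rmax; destruct Rle_dec; auto).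
assert (Hin : forall z, Rmin x y <= z <= Rmax x y -> Defs.in_int a b z)
  by (intros z Hz; apply (in_int_between a b _ _ z Hm HM Hz)).
destruct (MVT_gen h x y (Derive h)) as [c [Hc Heq]].
- intros z Hz. destruct (Hd z (Hin z ltac:(lra))) as [l [Hl _]].
  rewrite (is_derive_unique _ _ _ Hl). exact Hl.
- intros z Hz. destruct (Hd z (Hin z Hz)) as [l [Hl _]].
  apply continuity_pt_filterlim. exact (@ex_derive_continuous R_AbsRing R_NormedModule h z (ex_intro _ l Hl)).
- destruct (Hd c (Hin c Hc)) as [l [Hl Hl0]].
  rewrite (is_derive_unique _ _ _ Hl) in Heq. rewrite Hxy in Heq.
  assert (l * (y - x) = 0) by lra.
  apply Rmult_integral in H as [H|H]; [apply Hl0; auto | apply E; lra].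
Qed.

Lemma id_adm a b F : (forall th, F th th = 0) -> admissible a b F (fun th => th).
Proof.
intros HF. split; [split|split; [|split]]; auto.
- intros; apply ex_derive_id.
- intros x _. apply continuous_ext with (fun _ => 1).
  + intros y. symmetry. apply is_derive_unique. apply (is_derive_id y).
  + apply continuous_const.
Qed.

Lemma uniq_of_inj a b (h : R -> R) :
  (forall x, Defs.in_int a b x -> exists l, is_derive h x l /\ l <> 0) ->
  unique_id_solution a b (fun tt th => h tt - h th).
Proof.
intros Hd. split.
- apply id_adm. intros; ring.
- intros tt [_ [Hmap [_ HF]]] th Hth.
  apply (inj_deriv a b h Hd); auto. specialize (HF th Hth). lra.
Qed.

Theorem lemmaA2 (t1 t2 t3 t4 : vec3) (thm thp : Rbar) (gamma : R -> R) :
  nondeg t1 t2 t3 t4 ->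
  gamma_maximal t1 t2 t3 t4 thm thp gamma ->
  unique_id_solution thm thp (f_u0 t1 t2 t4 gamma) /\
  unique_id_solution thm thp (f_v0 t1 t3 t4).
Proof.
intros [N1 [N2 _]] [[H0 [[Hgd _] [_ Hcon]]] _].
assert (n1 : vnorm t1 <> 0) by (apply (norm_nz t1 t2 t3); auto).
assert (n4 : vnorm t4 <> 0).
{ apply (norm_nz t4 t2 t3). rewrite triple_cyc. auto. }
split.
- apply (uniq_of_inj thm thp (fun th => dot (t2d t1 t2 (gamma th)) t4)).
  intros x Hx.
  destruct (Hcon x Hx) as [_ [_ [S2 [_ S4]]]].
  apply prod_pos_nz in S2. apply prod_pos_nz in S4.
  pose proof (Derive_correct _ _ (Hgd x Hx)) as Hg.
  set (g' := Derive gamma x) in *.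
  pose proof (vderive_comp _ gamma x _ g' (rot_vderive t1 t2 (gamma x) n1) Hg) as V1.
  pose proof (rot_vderive t4 t3 x n4) as V4.
  pose proof (dot_vderive _ _ x _ _ V1 V4) as DG.
  assert (DG0 : is_derive (fun y => dot (rot t1 (gamma y) t2) (rot t4 y t3)) x 0).
  { apply is_derive_ext_loc with (fun _ => dot t2 t3).
    - apply (filter_imp (Defs.in_int thm thp)); [|apply locally_int; auto].
      intros y Hy. symmetry. apply (Hcon y Hy).
    - auto_derive; auto. }
  apply is_derive_unique in DG. apply is_derive_unique in DG0.
  rewrite DG0 in DG. clear DG0.
  assert (Hg0 : g' <> 0).
  { intros E. rewrite E in DG. rewrite L_0, L_b in DG.
    apply S2. unfold t2d, t3d.
    assert (/ vnorm t4 <> 0) by (apply Rinv_neq_0_compat; auto).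
    apply (Rmult_eq_reg_l (- / vnorm t4)); [lra|]. unfold t3d in *. lra. }
  exists (dot (vscal g' (vscal (/ vnorm t1) (cross t1 (rot t1 (gamma x) t2)))) t4
          + dot (rot t1 (gamma x) t2) (mkv 0 0 0)).
  split.
  + apply (dot_vderive _ (fun _ => t4) x _ _ V1 (vderive_const t4 x)).
  + rewrite L_a, L_c. unfold t2d in S4.
    assert (/ vnorm t1 <> 0) by (apply Rinv_neq_0_compat; auto).
    rewrite Rplus_0_r. repeat apply Rmult_integral_contrapositive_currified; auto.
- apply (uniq_of_inj thm thp (fun th => dot (t3d t4 t3 th) t1)).
  intros x Hx.
  destruct (Hcon x Hx) as [_ [_ [_ [S3 _]]]].
  apply prod_pos_nz in S3.
  pose proof (rot_vderive t4 t3 x n4) as V4.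
  exists (dot (vscal (/ vnorm t4) (cross t4 (rot t4 x t3))) t1
          + dot (rot t4 x t3) (mkv 0 0 0)).
  split.
  + apply (dot_vderive _ (fun _ => t1) x _ _ V4 (vderive_const t1 x)).
  + rewrite L_a1, L_c, Rplus_0_r.
    assert (/ vnorm t4 <> 0) by (apply Rinv_neq_0_compat; auto).
    apply Rmult_integral_contrapositive_currified; auto.
    rewrite triple_swap. unfold t3d in S3. intro E; apply S3; lra.
Qed.
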